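(* Let $S$ be an integral domain of characteristic zero, and let $R$ be a subring of $S$. Suppose $g,h\in S[x]$ are monic polynomials with zero constant term (i.e. $g,h\in xS[x]$) such that $g(h(x))\in R[x]$. Then all coefficients of $g$ and of $h$ lie in $\mathbb{Q}.R$.
   Context: Here $\mathbb{Q}.R$ denotes the subring of the fraction field of $S$ generated by $\mathbb{Q}$ and $R$, i.e. the set of elements $r/n$ with $r\in R$ and $n$ a positive integer (this makes sense since $S$ has characteristic zero). *)

(* Defs.v *)
From HB Require Import structures.
From mathcomp Require Import all_boot all_order all_algebra.
From mathcomp Require Import fraction.
Set Implicit Arguments. Unset Strict Implicit. Unset Printing Implicit Defensive.
Import Order.TTheory GRing.Theory Num.Theory.
Local Open Scope ring_scope.

(* Q.R : the subring of the fraction field of S generated by Q and R,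
   i.e. the elements r/n with r in R and n a positive integer.
   [in_QR R x] : the element x of S, viewed in {fraction S}, lies in Q.R. *)
Definition in_QR (S : idomainType) (R : {pred S}) (x : S) : Prop :=
  exists (r : S) (n : nat), [/\ r \in R, (0 < n)%N & @FracField.tofrac S x = @FracField.tofrac S r / (n%:R : {fraction S})].

(* Main.v *)
Require Import Defs.
From HB Require Import structures.
From mathcomp Require Import all_boot all_order all_algebra.
From mathcomp Require Import fraction.
From mathcomp Require Import zify ring.
Import Order.TTheory GRing.Theory Num.Theory.
Local Open Scope ring_scope.

Set Implicit Arguments. Unset Strict Implicit.
Section Main.
Variable K : fieldType.
Variable P : K -> Prop.
Hypothesis P0 : P 0.
Hypothesis P1 : P 1.
Hypothesis PB : forall x y, P x -> P y -> P (x - y).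
Hypothesis PM : forall x y, P x -> P y -> P (x * y).
Hypothesis Pdiv : forall x n, (0 < n)%N -> P x -> P (x / n%:R).
Hypothesis Kchar : forall n, (0 < n)%N -> (n%:R : K) != 0.

Lemma PN x : P x -> P (- x).
Proof. by move=> Hx; rewrite -sub0r; apply: PB. Qed.
Lemma PD x y : P x -> P y -> P (x + y).
Proof. by move=> Hx Hy; rewrite -[y]opprK; apply: PB => //; apply: PN. Qed.
Lemma Psum (I : Type) (r : seq I) (Q : pred I) F :
  (forall i, Q i -> P (F i)) -> P (\sum_(i <- r | Q i) F i).
Proof. by move=> H; apply: (big_ind P) => //; apply: PD. Qed.

Definition PP (p : {poly K}) := forall i, P p`_i.

Lemma PPB p q : PP p -> PP q -> PP (p - q).
Proof. by move=> Hp Hq i; rewrite coefB; apply: PB. Qed.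
Lemma PPD p q : PP p -> PP q -> PP (p + q).
Proof. by move=> Hp Hq i; rewrite coefD; apply: PD. Qed.
Lemma PPM p q : PP p -> PP q -> PP (p * q).
Proof. by move=> Hp Hq i; rewrite coefM; apply: Psum => j _; apply: PM. Qed.
Lemma PP1 : PP 1.
Proof. by move=> i; rewrite coef1; case: (i == 0%N). Qed.
Lemma PPX n p : PP p -> PP (p ^+ n).
Proof. by move=> Hp; elim: n => [|n IH]; [exact: PP1| rewrite exprS; apply: PPM]. Qed.
Lemma PPZ c p : P c -> PP p -> PP (c *: p).
Proof. by move=> Hc Hp i; rewrite coefZ; apply: PM. Qed.
Lemma PPXn d : PP 'X^d.
Proof. by move=> i; rewrite coefXn; case: (i == d). Qed.

Lemma comp_over (H : {poly K}) : H \is monic -> (1 < size H)%N -> PP H ->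
  forall n (p : {poly K}), (size p <= n)%N -> PP (p \Po H) -> PP p.
Proof.
move=> Hm Hs HP; elim=> [|n IH] p.
  rewrite leqn0 size_poly_eq0 => /eqP -> _ i; rewrite coef0; exact: P0.
move=> Hsz Hc.
have Pc : P (lead_coef p).
  have := lead_coef_comp p Hs; rewrite (monicP Hm) expr1n mulr1 => <-.
  by rewrite lead_coefE.
set d := (size p).-1.
have Hp' : PP (p - lead_coef p *: 'X^d).
  apply: IH.
    apply/leq_sizeP => j Hj; rewrite coefB coefZ coefXn.
    have [->|ne] := eqVneq j d; first by rewrite mulr1 -lead_coefE subrr.
    rewrite mulr0 subr0.
    have Hdj : (d <= j)%N.
      apply: leq_trans Hj; rewrite /d; by case: (size p) Hsz.
    have Hj' : (size p <= j)%N.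
      by rewrite (leq_trans (leqSpred _)) // ltn_neqAle eq_sym ne Hdj.
    by move/leq_sizeP: Hj'; apply.
  rewrite comp_polyB comp_polyZ comp_Xn_poly.
  by apply: PPB => //; apply: PPZ => //; apply: PPX.
by rewrite -(subrK (lead_coef p *: 'X^d) p); apply: PPD => //; apply: PPZ => //; apply: PPXn.
Qed.

Lemma coefM_top (e T : {poly K}) j D : (size e <= j.+1)%N ->
  (forall i, (D < i)%N -> T`_i = 0) -> (e * T)`_(j + D) = e`_j * T`_D.
Proof.
move=> He HT; have jlt : (j < (j + D).+1)%N by lia.
rewrite coefM (bigD1 (Ordinal jlt)) //=.
rewrite addKn big1 ?addr0 // => -[i Hi] /= /eqP ne.
have [lt|gt] := ltnP i j.
  by rewrite HT ?mulr0 //; lia.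
have ne' : i <> j by move=> E; apply: ne; exact: val_inj.
have -> : e`_i = 0 by apply: (leq_sizeP _ _ He); lia.
by rewrite mul0r.
Qed.

Lemma monic_deg (A : {poly K}) : A \is monic -> size A = (size A).-1.+1.
Proof.
move=> Am; rewrite prednK // lt0n size_poly_eq0; exact: monic_neq0.
Qed.

Lemma monic_top (A : {poly K}) D : A \is monic -> (size A).-1 = D ->
  A`_D = 1 /\ (forall i, (D < i)%N -> A`_i = 0).
Proof.
move=> Am HD; split; first by rewrite -HD -lead_coefE; exact/monicP.
move=> i Hi; apply: (leq_sizeP _ _ (leqnn (size A))).
by rewrite (monic_deg Am) HD.
Qed.

Lemma degM (A B : {poly K}) : A \is monic -> B \is monic ->
  (size (A * B)).-1 = ((size A).-1 + (size B).-1)%N.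
Proof.
move=> Am Bm; rewrite size_mul ?monic_neq0 //.
by rewrite (monic_deg Am) (monic_deg Bm) addSn addnS.
Qed.

Lemma key (G H : {poly K}) m n : G \is monic -> H \is monic ->
  size G = m.+1 -> size H = n.+1 -> (0 < m)%N -> PP (G \Po H) ->
  forall j, (0 < j)%N -> (j < n)%N -> (forall i, (j < i)%N -> P H`_i) -> P H`_j.
Proof.
move=> Gm Hm SG SH m0 HF j j0 jn Hi.
set e := take_poly j.+1 H.
set H' := H - e.
have PH' : PP H'.
  move=> i; rewrite /H' coefB coef_take_poly.
  case: ltnP => Hij; first by rewrite subrr; exact: P0.
  by rewrite subr0; apply: Hi.
have Se : (size e <= j.+1)%N by exact: size_take_poly.
have Se' : (size (- e) < size H)%N by rewrite size_polyN SH; apply: leq_ltn_trans Se _.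
have H'm : H' \is monic.
  by apply/monicP; rewrite /H' lead_coefDl //; exact/monicP.
have SH' : (size H').-1 = n by rewrite /H' size_polyDl // SH.
set D := ((m.-1) * n)%N.
set T := \sum_(i < m) H ^+ (m.-1 - i) * H' ^+ i.
have term : forall i : 'I_m, (size (H ^+ (m.-1 - i) * H' ^+ i)).-1 = D.
  move=> i; rewrite degM ?monic_exp // !size_exp SH' SH /= /D.
  have Him : (i <= m.-1)%N by have := ltn_ord i; lia.
  by rewrite -mulnDr subnK // mulnC.
have Tm : forall k : 'I_m, H ^+ (m.-1 - k) * H' ^+ k \is monic.
  by move=> k; apply: rpredM; apply: monic_exp.
have HT : forall i, (D < i)%N -> T`_i = 0.
  move=> i Hi0; rewrite /T coef_sum big1 // => k _.
  by have [_ ->] := monic_top (Tm k) (term k).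
have TD : T`_D = m%:R.
  rewrite /T coef_sum (eq_bigr (fun _ => 1)) ?sumr_const ?card_ord // => k _.
  by have [-> _] := monic_top (Tm k) (term k).
have Hpow : H ^+ m - H' ^+ m = e * T by rewrite subrXX /H' opprB addrC subrK.
have Hcoef : (H ^+ m)`_(j + D) = (H' ^+ m)`_(j + D) + H`_j * m%:R.
  rewrite -[H ^+ m](subrK (H' ^+ m)) Hpow coefD coefM_top // TD addrC.
  by rewrite /e coef_take_poly ltnSn.
have HG : (G \Po H)`_(j + D) = (H ^+ m)`_(j + D).
  have SGX : (size (G - 'X^m)%R <= m)%N.
    apply/leq_sizeP => i Hi0; rewrite coefB coefXn; case: eqVneq => [->|ne].
      by have := monicP Gm; rewrite lead_coefE SG /= => ->; rewrite subrr.
    rewrite subr0; apply: (leq_sizeP _ _ (leqnn (size G))); rewrite SG; lia.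
  have := size_comp_poly_leq (G - 'X^m) H.
  rewrite comp_polyB comp_Xn_poly SH /= => Hs.
  have Hle : ((size (G - 'X^m)%R).-1 * n <= D)%N.
    by rewrite /D leq_mul2r; apply/orP; right; lia.
  have : ((G \Po H) - H ^+ m)`_(j + D) = 0.
    apply: (leq_sizeP _ _ Hs); apply: (leq_ltn_trans Hle); by rewrite -{1}[D]add0n ltn_add2r.
  by rewrite coefB => /eqP; rewrite subr_eq0 => /eqP.
have -> : H`_j = ((G \Po H)`_(j + D) - (H' ^+ m)`_(j + D)) / m%:R.
  by rewrite HG Hcoef [_ + H`_j * _]addrC addrK mulfK //; apply: Kchar.
by apply: Pdiv => //; apply: PB; [exact: HF | exact: PPX].
Qed.

Lemma allH (G H : {poly K}) m n : G \is monic -> H \is monic ->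
  size G = m.+1 -> size H = n.+1 -> (0 < m)%N -> PP (G \Po H) -> P H`_0 -> PP H.
Proof.
move=> Gm Hm SG SH m0 HF H0.
suff : forall t i, (n - t <= i)%N -> P H`_i by move=> /(_ n) H1 i; apply: H1; lia.
elim=> [|t IH] i Hti.
  have [->|ne] := eqVneq i n.
    by have := monicP Hm; rewrite lead_coefE SH /= => ->.
  have -> : H`_i = 0 by apply: (leq_sizeP _ _ (leqnn (size H))); rewrite SH; lia.
  exact: P0.
have [le|lt] := leqP (n - t) i; first exact: IH.
have [->|i0] := posnP i; first exact: H0.
apply: (key Gm Hm SG SH m0 HF) => //; first lia.
move=> i' Hi'; apply: IH; lia.
Qed.

Lemma main (G H : {poly K}) : G \is monic -> H \is monic ->
  G`_0 = 0 -> H`_0 = 0 -> PP (G \Po H) -> PP G /\ PP H.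
Proof.
move=> Gm Hm G0 H0 HF.
have SG := monic_deg Gm; have SH := monic_deg Hm.
set m := (size G).-1 in SG; set n := (size H).-1 in SH.
have m0 : (0 < m)%N.
  rewrite lt0n; apply/eqP => E; have := monicP Gm; rewrite lead_coefE -/m E G0.
  by move/eqP; rewrite eq_sym oner_eq0.
have n0 : (0 < n)%N.
  rewrite lt0n; apply/eqP => E; have := monicP Hm; rewrite lead_coefE -/n E H0.
  by move/eqP; rewrite eq_sym oner_eq0.
have PH : PP H by apply: (allH Gm Hm SG SH m0 HF); rewrite H0; exact: P0.
split => //.
apply: (comp_over Hm _ PH (leqnn (size G)) HF).
by rewrite SH ltnS.
Qed.
End Main.
Lemma frac_sub (F : fieldType) (a b c d : F) : c != 0 -> d != 0 ->
  a / c - b / d = (a * d - b * c) / (c * d).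
Proof. by move=> hc hd; field; rewrite hc hd. Qed.
Lemma frac_mul (F : fieldType) (a b c d : F) : c != 0 -> d != 0 ->
  (a / c) * (b / d) = (a * b) / (c * d).
Proof. by move=> hc hd; field; rewrite hc hd. Qed.
Lemma frac_div (F : fieldType) (a c d : F) : c != 0 -> d != 0 ->
  (a / c) / d = a / (c * d).
Proof. by move=> hc hd; field; rewrite hc hd. Qed.

Unset Implicit Arguments. Set Strict Implicit.

Theorem proposition2p1 (S : idomainType) (R : {pred S})
  (charS0 : [pchar S] =i pred0) (subR : subring_closed R)
  (g h : {poly S}) (gmon : g \is monic) (hmon : h \is monic)
  (g0 : g`_0 = 0) (h0 : h`_0 = 0)
  (ghR : forall i : nat, (g \Po h)`_i \in R) :
  (forall i : nat, in_QR R g`_i) /\ (forall i : nat, in_QR R h`_i).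
Proof.
pose K := {fraction S}.
pose P := fun x : K => exists (r : S) (n : nat), [/\ r \in R, (0 < n)%N & x = tofrac r / (n%:R : K)].
have [R1 RB RM] := subR.
have R0 : (0 : S) \in R by rewrite -(subrr 1); apply: (RB).
have RD : forall u v, u \in R -> v \in R -> u + v \in R.
  move=> u v Hu Hv; have -> : u + v = u - (0 - v) by rewrite sub0r opprK.
  by apply: (RB) => //; apply: (RB).
have RMn : forall u k, u \in R -> u *+ k \in R.
  by move=> u k Hu; elim: k => [|k IH]; rewrite ?mulr0n // mulrS; apply: (RD).
have Kchar : forall n, (0 < n)%N -> (n%:R : K) != 0.
  move=> n n0; have -> : (n%:R : K) = tofrac n%:R by rewrite tofracMn tofrac1.
  by rewrite tofrac_eq0; move/pcharf0P: charS0 => ->; rewrite -lt0n.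
have tfMn : forall (u : S) k, tofrac (u *+ k) = tofrac u * k%:R.
  by move=> u k; rewrite tofracMn mulr_natr.
have P0 : P 0.
  by exists 0, 1%N; split => //; rewrite tofrac0 mul0r.
have P1 : P 1.
  by exists 1, 1%N; split => //; rewrite tofrac1 divr1.
have PB : forall x y, P x -> P y -> P (x - y).
  move=> x y [a [n1 [Ha n10 ->]]] [b [n2 [Hb n20 ->]]].
  exists (a *+ n2 - b *+ n1), (n1 * n2)%N; split.
  - by apply: (RB); apply: (RMn).
  - by rewrite muln_gt0 n10.
  - have h1 := Kchar _ n10; have h2 := Kchar _ n20.
    by rewrite tofracB !tfMn natrM frac_sub.
have PM : forall x y, P x -> P y -> P (x * y).
  move=> x y [a [n1 [Ha n10 ->]]] [b [n2 [Hb n20 ->]]].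
  exists (a * b), (n1 * n2)%N; split.
  - by apply: (RM).
  - by rewrite muln_gt0 n10.
  - have h1 := Kchar _ n10; have h2 := Kchar _ n20.
    by rewrite tofracM natrM frac_mul.
have Pdiv : forall x n, (0 < n)%N -> P x -> P (x / n%:R).
  move=> x n n0 [a [n1 [Ha n10 ->]]].
  exists a, (n1 * n)%N; split => //.
  - by rewrite muln_gt0 n10.
  - have h1 := Kchar _ n10; have h2 := Kchar _ n0.
    by rewrite natrM frac_div.
pose G := map_poly (@tofrac S) g; pose H := map_poly (@tofrac S) h.
have cG : forall i, G`_i = tofrac g`_i by move=> i; rewrite coef_map.
have cH : forall i, H`_i = tofrac h`_i by move=> i; rewrite coef_map.
have Gm : G \is monic by apply: monic_map.
have Hm : H \is monic by apply: monic_map.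
have HF : PP P (G \Po H).
  move=> i; rewrite -map_comp_poly coef_map.
  by exists (g \Po h)`_i, 1%N; split => //; rewrite divr1.
have G0 : G`_0 = 0 by rewrite cG g0 tofrac0.
have H0 : H`_0 = 0 by rewrite cH h0 tofrac0.
have [PG PH] := main P0 P1 PB PM Pdiv Kchar Gm Hm G0 H0 HF.
by split => i; [have := PG i; rewrite cG | have := PH i; rewrite cH].
Qed.
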